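(* Let $F,G:\mathcal{C}\to\mathcal{D}$ be lax monoidal functors between monoidal categories. There are canonical isomorphisms of categories $\mathcal{Z}^w_l(F,\mathcal{D},G)\cong\mathrm{Colax}(Del(F),Del(G))$, $\mathcal{Z}^s_l(F,\mathcal{D},G)\cong\mathrm{Pseudo}(Del(F),Del(G))$, $\mathcal{Z}^w_r(F,\mathcal{D},G)\cong\mathrm{Lax}(Del(F),Del(G))$ and $\mathcal{Z}^s_r(F,\mathcal{D},G)\cong\mathrm{Pseudo}(Del(F),Del(G))$.
   Context: $Del(\mathcal{C})$ is the one-object bicategory with hom-category $\mathcal{C}$ and horizontal composition the tensor product, with composite $g\circ f$ corresponding to $g\otimes f$; $Del(F)$ is the induced lax functor. $\mathcal{D}$ is a $(\mathcal{D},\mathcal{D})$-bimodule category via $\otimes$. $\mathcal{Z}^w_l(F,\mathcal{D},G)$: objects $(M,\sigma)$ with $\sigma_X:M\otimes F(X)\to G(X)\otimes M$ natural, $(G^2_{Y,X}\otimes M)(\mathrm{id}\otimes\sigma_X)(\sigma_Y\otimes\mathrm{id})=\sigma_{Y\otimes X}(M\otimes F^2_{Y,X})$, $\sigma_I(M\otimes F^0)=G^0\otimes M$; morphisms $f$ with $(\mathrm{id}\otimes f)\sigma_X=\tau_X(f\otimes\mathrm{id})$. $\mathcal{Z}^w_r(F,\mathcal{D},G)$: objects $(M,\tilde\sigma)$ with $\tilde\sigma_X:G(X)\otimes M\to M\otimes F(X)$ natural, $(M\otimes F^2_{Y,X})(\tilde\sigma_Y\otimes\mathrm{id})(\mathrm{id}\otimes\tilde\sigma_X)=\tilde\sigma_{Y\otimes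 X}(G^2_{Y,X}\otimes M)$, $\tilde\sigma_I(G^0\otimes M)=M\otimes F^0$; morphisms $f$ with $(f\otimes\mathrm{id})\tilde\sigma_X=\tilde\tau_X(\mathrm{id}\otimes f)$. The superscript $s$ denotes the full subcategories where the half-braidings are invertible. For lax functors $\mathcal{F},\mathcal{G}$ between bicategories, $\mathrm{Colax}(\mathcal{F},\mathcal{G})$ (resp. $\mathrm{Lax}(\mathcal{F},\mathcal{G})$, $\mathrm{Pseudo}(\mathcal{F},\mathcal{G})$) is the category of colax (resp. lax, pseudo) natural transformations and modifications. A colax natural transformation has 2-cells $\chi_f:\chi_B\circ\mathcal{F}(f)\Rightarrow\mathcal{G}(f)\circ\chi_A$ natural in $f$ with $(\mathcal{G}^2_{g,f}\circ 1)\cdot(1\circ\chi_f)\cdot(\chi_g\circ 1)=\chi_{gf}\cdot(1\circ\mathcal{F}^2_{g,f})$ and $\chi_{\mathrm{id}_A}\cdot(1\circ\mathcal{F}^0_A)=\mathcal{G}^0_A\circ 1$; a lax natural transformation has 2-cells $\psi_f:\mathcal{G}(f)\circ\psi_A\Rightarrow\psi_B\circ\mathcal{F}(f)$ with $\psi_{gf}\cdot(\mathcal{G}^2_{g,f}\circ1)=(1\circ\mathcal{F}^2_{g,f})\cdot(\psi_g\circ 1)\cdot(1\circ\psi_f)$ and $\psi_{\mathrm{id}_A}\cdot(\mathcal{G}^0_A\circ1)=1\circ\mathcal{F}^0_A$; pseudonatural means the 2-cells are invertible. A modification $a:\chi\Rrightarrow\chi'$ of colax transformations is a family $a_A:\chi_A\Rightarrow\chi'_A$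 with $(1_{\mathcal{G}(f)}\circ a_A)\cdot\chi_f=\chi'_f\cdot(a_B\circ 1_{\mathcal{F}(f)})$; for lax transformations $(a_B\circ 1)\cdot\psi_f=\psi'_f\cdot(1\circ a_A)$. *)

(* Defs.v *)
(* Associators and unitors, suppressed in the
   paper's formulas, are inserted explicitly. *)
From Stdlib Require Import ProofIrrelevance FunctionalExtensionality.

Record Cat : Type := {
  ob :> Type;
  hom : ob -> ob -> Type;
  idm : forall a, hom a a;
  comp : forall a b c, hom b c -> hom a b -> hom a c;
  comp_id_l : forall a b (f : hom a b), comp a b b (idm b) f = f;
  comp_id_r : forall a b (f : hom a b), comp a a b f (idm a) = f;
  comp_assoc : forall a b c d (h : hom c d) (g : hom b c) (f : hom a b),
    comp a c d h (comp a b c g f) = comp a b d (comp b c d h g) f }.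
Arguments hom {_} _ _.
Arguments idm {_} _.
Arguments comp {_ _ _ _} _ _.
Notation "g ∘ f" := (comp g f) (at level 40, left associativity).

Definition is_iso {C : Cat} {a b : C} (f : hom a b) : Prop :=
  exists g : hom b a, g ∘ f = idm a /\ f ∘ g = idm b.

Record Functor (C D : Cat) : Type := {
  fob :> C -> D;
  fmap : forall a b : C, hom a b -> hom (fob a) (fob b);
  fmap_id : forall a, fmap a a (idm a) = idm (fob a);
  fmap_comp : forall a b c (g : hom b c) (f : hom a b),
    fmap a c (g ∘ f) = fmap b c g ∘ fmap a b f }.
Arguments fob {C D} _ _.
Arguments fmap {C D} _ {a b} _.

Definition hcast {C : Cat} {a b a' b' : C} (ea : a = a') (eb : b = b')
  (f : hom a b) : hom a' b' :=
  match ea in _ = x, eb in _ = y return hom x y with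
  | eq_refl, eq_refl => f end.

Definition CatIso (C D : Cat) : Prop :=
  exists (P : Functor C D) (Q : Functor D C)
    (e1 : forall a : C, Q (P a) = a) (e2 : forall b : D, P (Q b) = b),
    (forall (a a' : C) (f : hom a a'),
        hcast (e1 a) (e1 a') (fmap Q (fmap P f)) = f) /\
    (forall (b b' : D) (g : hom b b'),
        hcast (e2 b) (e2 b') (fmap P (fmap Q g)) = g).

Definition FullSub (C : Cat) (P : C -> Prop) : Cat.
Proof.
  refine {| ob := {x : C | P x};
            hom := fun a b => hom (proj1_sig a) (proj1_sig b);
            idm := fun a => idm (proj1_sig a);
            comp := fun a b c g f => g ∘ f |}.
  - intros; apply comp_id_l.
  - intros; apply comp_id_r.
  - intros; apply comp_assoc.
Defined.

Lemma sig_eq {T : Type} {P : T -> Prop} (x y : sig P) :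
  proj1_sig x = proj1_sig y -> x = y.
Proof.
  destruct x as [x px], y as [y py]; simpl; intros e; subst y.
  f_equal; apply proof_irrelevance.
Qed.

Record MonCat : Type := {
  mcat :> Cat;
  tens : mcat -> mcat -> mcat;
  tensm : forall a b c d : mcat, hom a b -> hom c d -> hom (tens a c) (tens b d);
  tensm_id : forall a c : mcat, tensm a a c c (idm a) (idm c) = idm (tens a c);
  tensm_comp : forall (a b e c d k : mcat) (f1 : hom b e) (f0 : hom a b)
      (g1 : hom d k) (g0 : hom c d),
    tensm a e c k (f1 ∘ f0) (g1 ∘ g0) = tensm b e d k f1 g1 ∘ tensm a b c d f0 g0;
  munit : mcat;
  asc : forall x y z : mcat, hom (tens (tens x y) z) (tens x (tens y z));
  asc_inv : forall x y z : mcat, hom (tens x (tens y z)) (tens (tens x y) z);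
  asc_inv_l : forall x y z, asc_inv x y z ∘ asc x y z = idm _;
  asc_inv_r : forall x y z, asc x y z ∘ asc_inv x y z = idm _;
  asc_nat : forall x x' y y' z z' (f : hom x x') (g : hom y y') (h : hom z z'),
    asc x' y' z' ∘ tensm _ _ _ _ (tensm _ _ _ _ f g) h
    = tensm _ _ _ _ f (tensm _ _ _ _ g h) ∘ asc x y z;
  lu : forall x : mcat, hom (tens munit x) x;
  lu_inv : forall x : mcat, hom x (tens munit x);
  lu_inv_l : forall x, lu_inv x ∘ lu x = idm _;
  lu_inv_r : forall x, lu x ∘ lu_inv x = idm _;
  lu_nat : forall x y (f : hom x y), lu y ∘ tensm _ _ _ _ (idm munit) f = f ∘ lu x;
  ru : forall x : mcat, hom (tens x munit) x;
  ru_inv : forall x : mcat, hom x (tens x munit);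
  ru_inv_l : forall x, ru_inv x ∘ ru x = idm _;
  ru_inv_r : forall x, ru x ∘ ru_inv x = idm _;
  ru_nat : forall x y (f : hom x y), ru y ∘ tensm _ _ _ _ f (idm munit) = f ∘ ru x;
  pentagon : forall w x y z,
    asc w x (tens y z) ∘ asc (tens w x) y z
    = tensm _ _ _ _ (idm w) (asc x y z) ∘ asc w (tens x y) z
      ∘ tensm _ _ _ _ (asc w x y) (idm z);
  triangle : forall x y,
    tensm _ _ _ _ (idm x) (lu y) ∘ asc x munit y = tensm _ _ _ _ (ru x) (idm y) }.
Arguments tens {_} _ _.
Arguments tensm {_ _ _ _ _} _ _.
Arguments munit {_}.
Arguments asc {_} _ _ _.
Arguments asc_inv {_} _ _ _.
Arguments lu {_} _.
Arguments lu_inv {_} _.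
Arguments ru {_} _.
Arguments ru_inv {_} _.

Record LaxMonFun (C D : MonCat) : Type := {
  lmf :> Functor C D;
  lm2 : forall x y : C, hom (tens (lmf x) (lmf y)) (lmf (tens x y));
  lm0 : hom (@munit D) (lmf (@munit C));
  lm2_nat : forall (x x' y y' : C) (f : hom x x') (g : hom y y'),
    lm2 x' y' ∘ tensm (fmap lmf f) (fmap lmf g) = fmap lmf (tensm f g) ∘ lm2 x y;
  lm_assoc : forall x y z : C,
    fmap lmf (asc x y z) ∘ lm2 (tens x y) z ∘ tensm (lm2 x y) (idm (lmf z))
    = lm2 x (tens y z) ∘ tensm (idm (lmf x)) (lm2 y z) ∘ asc (lmf x) (lmf y) (lmf z);
  lm_lunit : forall x : C,
    fmap lmf (lu x) ∘ lm2 munit x ∘ tensm lm0 (idm (lmf x)) = lu (lmf x);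
  lm_runit : forall x : C,
    fmap lmf (ru x) ∘ lm2 x munit ∘ tensm (idm (lmf x)) lm0 = ru (lmf x) }.
Arguments lmf {C D} _.
Arguments lm2 {C D} _ _ _.
Arguments lm0 {C D} _.

Record Bicat : Type := {
  bob : Type;
  bhom : bob -> bob -> Cat;
  bid : forall A, bhom A A;
  h1 : forall A B C, bhom B C -> bhom A B -> bhom A C;
  h2 : forall A B C (g g' : bhom B C) (f f' : bhom A B),
    hom g g' -> hom f f' -> hom (h1 A B C g f) (h1 A B C g' f');
  h2_id : forall A B C (g : bhom B C) (f : bhom A B),
    h2 A B C g g f f (idm g) (idm f) = idm (h1 A B C g f);
  h2_comp : forall A B C (g g' g'' : bhom B C) (f f' f'' : bhom A B)
      (b1 : hom g' g'') (b0 : hom g g') (a1 : hom f' f'') (a0 : hom f f'),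
    h2 A B C g g'' f f'' (b1 ∘ b0) (a1 ∘ a0)
    = h2 A B C g' g'' f' f'' b1 a1 ∘ h2 A B C g g' f f' b0 a0;
  bas : forall A B C D (h : bhom C D) (g : bhom B C) (f : bhom A B),
    hom (h1 A B D (h1 B C D h g) f) (h1 A C D h (h1 A B C g f));
  bas_inv : forall A B C D (h : bhom C D) (g : bhom B C) (f : bhom A B),
    hom (h1 A C D h (h1 A B C g f)) (h1 A B D (h1 B C D h g) f);
  bas_inv_l : forall A B C D h g f, bas_inv A B C D h g f ∘ bas A B C D h g f = idm _;
  bas_inv_r : forall A B C D h g f, bas A B C D h g f ∘ bas_inv A B C D h g f = idm _;
  bas_nat : forall A B C D (h h' : bhom C D) (g g' : bhom B C) (f f' : bhom A B)
      (c : hom h h') (b : hom g g') (a : hom f f'),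
    bas A B C D h' g' f' ∘ h2 _ _ _ _ _ _ _ (h2 _ _ _ _ _ _ _ c b) a
    = h2 _ _ _ _ _ _ _ c (h2 _ _ _ _ _ _ _ b a) ∘ bas A B C D h g f;
  blu : forall A B (f : bhom A B), hom (h1 A B B (bid B) f) f;
  blu_inv : forall A B (f : bhom A B), hom f (h1 A B B (bid B) f);
  blu_inv_l : forall A B f, blu_inv A B f ∘ blu A B f = idm _;
  blu_inv_r : forall A B f, blu A B f ∘ blu_inv A B f = idm _;
  blu_nat : forall A B (f f' : bhom A B) (a : hom f f'),
    blu A B f' ∘ h2 _ _ _ _ _ _ _ (idm (bid B)) a = a ∘ blu A B f;
  bru : forall A B (f : bhom A B), hom (h1 A A B f (bid A)) f;
  bru_inv : forall A B (f : bhom A B), hom f (h1 A A B f (bid A));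
  bru_inv_l : forall A B f, bru_inv A B f ∘ bru A B f = idm _;
  bru_inv_r : forall A B f, bru A B f ∘ bru_inv A B f = idm _;
  bru_nat : forall A B (f f' : bhom A B) (a : hom f f'),
    bru A B f' ∘ h2 _ _ _ _ _ _ _ a (idm (bid A)) = a ∘ bru A B f;
  bpent : forall A B C D E (k : bhom D E) (h : bhom C D) (g : bhom B C) (f : bhom A B),
    bas _ _ _ _ k h (h1 _ _ _ g f) ∘ bas _ _ _ _ (h1 _ _ _ k h) g f
    = h2 _ _ _ _ _ _ _ (idm k) (bas _ _ _ _ h g f) ∘ bas _ _ _ _ k (h1 _ _ _ h g) f
      ∘ h2 _ _ _ _ _ _ _ (bas _ _ _ _ k h g) (idm f);
  btri : forall A B C (g : bhom B C) (f : bhom A B),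
    h2 _ _ _ _ _ _ _ (idm g) (blu _ _ f) ∘ bas _ _ _ _ g (bid B) f
    = h2 _ _ _ _ _ _ _ (bru _ _ g) (idm f) }.
Arguments bhom {_} _ _.
Arguments bid {_} _.
Arguments h1 {_ _ _ _} _ _.
Arguments h2 {_ _ _ _ _ _ _ _} _ _.
Arguments bas {_ _ _ _ _} _ _ _.
Arguments bas_inv {_ _ _ _ _} _ _ _.
Arguments blu {_ _ _} _.
Arguments blu_inv {_ _ _} _.
Arguments bru {_ _ _} _.
Arguments bru_inv {_ _ _} _.

Record LaxFun (B B' : Bicat) : Type := {
  lfo : bob B -> bob B';
  lfm : forall A A' : bob B, Functor (bhom A A') (bhom (lfo A) (lfo A'));
  lf2 : forall (A A' A'' : bob B) (g : bhom A' A'') (f : bhom A A'),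
    hom (h1 (lfm _ _ g) (lfm _ _ f)) (lfm _ _ (h1 g f));
  lf0 : forall A : bob B, hom (bid (lfo A)) (lfm A A (bid A));
  lf2_nat : forall (A A' A'' : bob B) (g g' : bhom A' A'') (f f' : bhom A A')
      (b : hom g g') (a : hom f f'),
    lf2 _ _ _ g' f' ∘ h2 (fmap (lfm _ _) b) (fmap (lfm _ _) a)
    = fmap (lfm _ _) (h2 b a) ∘ lf2 _ _ _ g f;
  lf_assoc : forall (A A' A'' A''' : bob B) (h : bhom A'' A''') (g : bhom A' A'')
      (f : bhom A A'),
    fmap (lfm _ _) (bas h g f) ∘ lf2 _ _ _ (h1 h g) f
      ∘ h2 (lf2 _ _ _ h g) (idm (lfm _ _ f))
    = lf2 _ _ _ h (h1 g f) ∘ h2 (idm (lfm _ _ h)) (lf2 _ _ _ g f)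
      ∘ bas (lfm _ _ h) (lfm _ _ g) (lfm _ _ f);
  lf_lunit : forall (A A' : bob B) (f : bhom A A'),
    fmap (lfm _ _) (blu f) ∘ lf2 _ _ _ (bid A') f ∘ h2 (lf0 A') (idm (lfm _ _ f))
    = blu (lfm _ _ f);
  lf_runit : forall (A A' : bob B) (f : bhom A A'),
    fmap (lfm _ _) (bru f) ∘ lf2 _ _ _ f (bid A) ∘ h2 (idm (lfm _ _ f)) (lf0 A)
    = bru (lfm _ _ f) }.
Arguments lfo {B B'} _ _.
Arguments lfm {B B'} _ {A A'}.
Arguments lf2 {B B'} _ {A A' A''} _ _.
Arguments lf0 {B B'} _ _.

Definition Del (C : MonCat) : Bicat.
Proof.
  refine {| bob := unit;
            bhom := fun _ _ => mcat C;
            bid := fun _ => @munit C;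
            h1 := fun _ _ _ g f => tens g f;
            h2 := fun _ _ _ g g' f f' b a => tensm b a;
            bas := fun _ _ _ _ h g f => asc h g f;
            bas_inv := fun _ _ _ _ h g f => asc_inv h g f;
            blu := fun _ _ f => lu f;
            blu_inv := fun _ _ f => lu_inv f;
            bru := fun _ _ f => ru f;
            bru_inv := fun _ _ f => ru_inv f |}.
  all: intros; simpl.
  - apply tensm_id.
  - apply tensm_comp.
  - apply asc_inv_l.
  - apply asc_inv_r.
  - apply asc_nat.
  - apply lu_inv_l.
  - apply lu_inv_r.
  - apply lu_nat.
  - apply ru_inv_l.
  - apply ru_inv_r.
  - apply ru_nat.
  - apply pentagon.
  - apply triangle.
Defined.

Definition DelF {C D : MonCat} (F : LaxMonFun C D) : LaxFun (Del C) (Del D).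
Proof.
  refine (@Build_LaxFun (Del C) (Del D) (fun _ => tt) (fun _ _ => lmf F)
            (fun _ _ _ g f => lm2 F g f) (fun _ => lm0 F) _ _ _ _).
  all: intros; simpl.
  - apply lm2_nat.
  - apply lm_assoc.
  - apply lm_lunit.
  - apply lm_runit.
Defined.

Section Transformations.
Context {B B' : Bicat} (F G : LaxFun B B').

Record ColaxT : Type := {
  cx : forall A, bhom (lfo F A) (lfo G A);
  cxf : forall (A A' : bob B) (f : bhom A A'),
    hom (h1 (cx A') (lfm F f)) (h1 (lfm G f) (cx A));
  cxf_nat : forall (A A' : bob B) (f f' : bhom A A') (a : hom f f'),
    cxf _ _ f' ∘ h2 (idm (cx A')) (fmap (lfm F) a)
    = h2 (fmap (lfm G) a) (idm (cx A)) ∘ cxf _ _ f;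
  cx_comp : forall (A A' A'' : bob B) (g : bhom A' A'') (f : bhom A A'),
    h2 (lf2 G g f) (idm (cx A)) ∘ bas_inv (lfm G g) (lfm G f) (cx A)
      ∘ h2 (idm (lfm G g)) (cxf _ _ f) ∘ bas (lfm G g) (cx A') (lfm F f)
      ∘ h2 (cxf _ _ g) (idm (lfm F f))
    = cxf _ _ (h1 g f) ∘ h2 (idm (cx A'')) (lf2 F g f)
      ∘ bas (cx A'') (lfm F g) (lfm F f);
  cx_id : forall A : bob B,
    cxf _ _ (bid A) ∘ h2 (idm (cx A)) (lf0 F A) ∘ bru_inv (cx A)
    = h2 (lf0 G A) (idm (cx A)) ∘ blu_inv (cx A) }.

Definition CMod (x y : ColaxT) : Type :=
  { a : forall A, hom (cx x A) (cx y A) |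
    forall (A A' : bob B) (f : bhom A A'),
      h2 (idm (lfm G f)) (a A) ∘ cxf x _ _ f = cxf y _ _ f ∘ h2 (a A') (idm (lfm F f)) }.

Record LaxT : Type := {
  lx : forall A, bhom (lfo F A) (lfo G A);
  lxf : forall (A A' : bob B) (f : bhom A A'),
    hom (h1 (lfm G f) (lx A)) (h1 (lx A') (lfm F f));
  lxf_nat : forall (A A' : bob B) (f f' : bhom A A') (a : hom f f'),
    lxf _ _ f' ∘ h2 (fmap (lfm G) a) (idm (lx A))
    = h2 (idm (lx A')) (fmap (lfm F) a) ∘ lxf _ _ f;
  lx_comp : forall (A A' A'' : bob B) (g : bhom A' A'') (f : bhom A A'),
    lxf _ _ (h1 g f) ∘ h2 (lf2 G g f) (idm (lx A))
    = h2 (idm (lx A'')) (lf2 F g f) ∘ bas (lx A'') (lfm F g) (lfm F f)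
      ∘ h2 (lxf _ _ g) (idm (lfm F f)) ∘ bas_inv (lfm G g) (lx A') (lfm F f)
      ∘ h2 (idm (lfm G g)) (lxf _ _ f) ∘ bas (lfm G g) (lfm G f) (lx A);
  lx_id : forall A : bob B,
    lxf _ _ (bid A) ∘ h2 (lf0 G A) (idm (lx A)) ∘ blu_inv (lx A)
    = h2 (idm (lx A)) (lf0 F A) ∘ bru_inv (lx A) }.

Definition LMod (x y : LaxT) : Type :=
  { a : forall A, hom (lx x A) (lx y A) |
    forall (A A' : bob B) (f : bhom A A'),
      h2 (a A') (idm (lfm F f)) ∘ lxf x _ _ f = lxf y _ _ f ∘ h2 (idm (lfm G f)) (a A) }.

End Transformations.

Lemma sigfun_eq {I : Type} {T : I -> Type} {P : (forall i, T i) -> Prop}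
  (x y : sig P) : (forall i, proj1_sig x i = proj1_sig y i) -> x = y.
Proof.
  intros H; apply sig_eq; apply functional_extensionality_dep; exact H.
Qed.

Lemma h2_idid {B : Bicat} {A A' A'' : bob B} (g : bhom A' A'') (f : bhom A A') :
  h2 (idm g) (idm f) = idm (h1 g f).
Proof. apply h2_id. Qed.

Definition ColaxCat {B B' : Bicat} (F G : LaxFun B B') : Cat.
Proof.
  unshelve refine {| ob := ColaxT F G; hom := CMod F G |}.
  - intros x. exists (fun A => idm (cx F G x A)).
    intros A A' f. rewrite !h2_idid, comp_id_l, comp_id_r. reflexivity.
  - intros x y z b a. exists (fun A => proj1_sig b A ∘ proj1_sig a A).
    intros A A' f.
    rewrite <- (comp_id_l _ _ _ (idm (lfm G f))), h2_comp, <- comp_assoc,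
      (proj2_sig a), comp_assoc, (proj2_sig b), <- comp_assoc, <- h2_comp,
      comp_id_l. reflexivity.
  - intros; apply sigfun_eq; intros; simpl; apply comp_id_l.
  - intros; apply sigfun_eq; intros; simpl; apply comp_id_r.
  - intros; apply sigfun_eq; intros; simpl; apply comp_assoc.
Defined.

Definition LaxCat {B B' : Bicat} (F G : LaxFun B B') : Cat.
Proof.
  unshelve refine {| ob := LaxT F G; hom := LMod F G |}.
  - intros x. exists (fun A => idm (lx F G x A)).
    intros A A' f. rewrite !h2_idid, comp_id_l, comp_id_r. reflexivity.
  - intros x y z b a. exists (fun A => proj1_sig b A ∘ proj1_sig a A).
    intros A A' f.
    rewrite <- (comp_id_l _ _ _ (idm (lfm F f))), h2_comp, <- comp_assoc,
      (proj2_sig a), comp_assoc, (proj2_sig b), <- comp_assoc, <- h2_comp,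
      comp_id_l. reflexivity.
  - intros; apply sigfun_eq; intros; simpl; apply comp_id_l.
  - intros; apply sigfun_eq; intros; simpl; apply comp_id_r.
  - intros; apply sigfun_eq; intros; simpl; apply comp_assoc.
Defined.

Definition PseudoCat {B B' : Bicat} (F G : LaxFun B B') : Cat :=
  FullSub (ColaxCat F G)
    (fun x => forall (A A' : bob B) (f : bhom A A'), is_iso (cxf F G x _ _ f)).

Section Centralizers.
Context {C D : MonCat} (F G : LaxMonFun C D).

Record ZlObj : Type := {
  zlm : D;
  zls : forall X : C, hom (tens zlm (F X)) (tens (G X) zlm);
  zls_nat : forall (X Y : C) (f : hom X Y),
    zls Y ∘ tensm (idm zlm) (fmap F f) = tensm (fmap G f) (idm zlm) ∘ zls X;
  zls_comp : forall X Y : C,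
    tensm (lm2 G Y X) (idm zlm) ∘ asc_inv (G Y) (G X) zlm
      ∘ tensm (idm (G Y)) (zls X) ∘ asc (G Y) zlm (F X)
      ∘ tensm (zls Y) (idm (F X))
    = zls (tens Y X) ∘ tensm (idm zlm) (lm2 F Y X) ∘ asc zlm (F Y) (F X);
  zls_unit :
    zls munit ∘ tensm (idm zlm) (lm0 F) ∘ ru_inv zlm
    = tensm (lm0 G) (idm zlm) ∘ lu_inv zlm }.

Definition ZlHom (x y : ZlObj) : Type :=
  { f : hom (zlm x) (zlm y) |
    forall X : C, tensm (idm (G X)) f ∘ zls x X = zls y X ∘ tensm f (idm (F X)) }.

Record ZrObj : Type := {
  zrm : D;
  zrs : forall X : C, hom (tens (G X) zrm) (tens zrm (F X));
  zrs_nat : forall (X Y : C) (f : hom X Y),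
    zrs Y ∘ tensm (fmap G f) (idm zrm) = tensm (idm zrm) (fmap F f) ∘ zrs X;
  zrs_comp : forall X Y : C,
    tensm (idm zrm) (lm2 F Y X) ∘ asc zrm (F Y) (F X)
      ∘ tensm (zrs Y) (idm (F X)) ∘ asc_inv (G Y) zrm (F X)
      ∘ tensm (idm (G Y)) (zrs X) ∘ asc (G Y) (G X) zrm
    = zrs (tens Y X) ∘ tensm (lm2 G Y X) (idm zrm);
  zrs_unit :
    zrs munit ∘ tensm (lm0 G) (idm zrm) ∘ lu_inv zrm
    = tensm (idm zrm) (lm0 F) ∘ ru_inv zrm }.

Definition ZrHom (x y : ZrObj) : Type :=
  { f : hom (zrm x) (zrm y) |
    forall X : C, tensm f (idm (F X)) ∘ zrs x X = zrs y X ∘ tensm (idm (G X)) f }.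

End Centralizers.

Definition ZlCat {C D : MonCat} (F G : LaxMonFun C D) : Cat.
Proof.
  unshelve refine {| ob := ZlObj F G; hom := ZlHom F G |}.
  - intros x. exists (idm (zlm F G x)).
    intros X. rewrite !tensm_id, comp_id_l, comp_id_r. reflexivity.
  - intros x y z b a. exists (proj1_sig b ∘ proj1_sig a).
    intros X.
    rewrite <- (comp_id_l _ _ _ (idm (G X))), tensm_comp, <- comp_assoc,
      (proj2_sig a), comp_assoc, (proj2_sig b), <- comp_assoc, <- tensm_comp,
      comp_id_l. reflexivity.
  - intros; apply sig_eq; simpl; apply comp_id_l.
  - intros; apply sig_eq; simpl; apply comp_id_r.
  - intros; apply sig_eq; simpl; apply comp_assoc.
Defined.

Definition ZrCat {C D : MonCat} (F G : LaxMonFun C D) : Cat.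
Proof.
  unshelve refine {| ob := ZrObj F G; hom := ZrHom F G |}.
  - intros x. exists (idm (zrm F G x)).
    intros X. rewrite !tensm_id, comp_id_l, comp_id_r. reflexivity.
  - intros x y z b a. exists (proj1_sig b ∘ proj1_sig a).
    intros X.
    rewrite <- (comp_id_l _ _ _ (idm (F X))), tensm_comp, <- comp_assoc,
      (proj2_sig a), comp_assoc, (proj2_sig b), <- comp_assoc, <- tensm_comp,
      comp_id_l. reflexivity.
  - intros; apply sig_eq; simpl; apply comp_id_l.
  - intros; apply sig_eq; simpl; apply comp_id_r.
  - intros; apply sig_eq; simpl; apply comp_assoc.
Defined.

Definition ZlsCat {C D : MonCat} (F G : LaxMonFun C D) : Cat :=
  FullSub (ZlCat F G) (fun x => forall X : C, is_iso (zls F G x X)).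

Definition ZrsCat {C D : MonCat} (F G : LaxMonFun C D) : Cat :=
  FullSub (ZrCat F G) (fun x => forall X : C, is_iso (zrs F G x X)).

(* Main.v *)
Require Import Defs.
From Stdlib Require Import ProofIrrelevance FunctionalExtensionality IndefiniteDescription.

Lemma hcast_refl {C : Cat} {a b : C} (ea : a = a) (eb : b = b) (f : hom a b) :
  hcast ea eb f = f.
Proof.
  rewrite (proof_irrelevance _ ea eq_refl), (proof_irrelevance _ eb eq_refl).
  reflexivity.
Qed.


Definition ip {C : Cat} {a b : C} (s : hom a b) (s' : hom b a) : Prop :=
  s' ∘ s = idm a /\ s ∘ s' = idm b.

Lemma ip_sym {C : Cat} {a b : C} (s : hom a b) s' : ip s s' -> ip s' s.
Proof. intros [h1 h2]; split; assumption. Qed.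

Lemma ip_comp {C : Cat} {a b c : C} (s : hom a b) s' (t : hom b c) t' :
  ip s s' -> ip t t' -> ip (t ∘ s) (s' ∘ t').
Proof.
  intros [h1 h2] [k1 k2]; split.
  - rewrite comp_assoc, <- (comp_assoc _ _ _ _ _ s'), k1, comp_id_r, h1; reflexivity.
  - rewrite comp_assoc, <- (comp_assoc _ _ _ _ _ t), h2, comp_id_r, k2; reflexivity.
Qed.

Lemma ip_uniq {C : Cat} {a b : C} (s : hom a b) s1 s2 : ip s s1 -> ip s s2 -> s1 = s2.
Proof.
  intros [h1 h2] [k1 k2].
  rewrite <- (comp_id_r _ _ _ s1), <- k2, comp_assoc, h1, comp_id_l; reflexivity.
Qed.

Lemma swap {C : Cat} {w x y z : C} (a : hom x y) (s : hom w x) (t : hom z y)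
  (b : hom w z) s' t' : ip s s' -> ip t t' -> a ∘ s = t ∘ b -> t' ∘ a = b ∘ s'.
Proof.
  intros [h1 h2] [k1 k2] e.
  rewrite <- (comp_id_r _ _ _ (t' ∘ a)), <- h2, comp_assoc, <- (comp_assoc _ _ _ _ _ t'), e,
    comp_assoc, k1, comp_id_l. reflexivity.
Qed.

Lemma ip_tens {D : MonCat} {a b c d : D} (f : hom a b) f' (g : hom c d) g' :
  ip f f' -> ip g g' -> ip (tensm f g) (tensm f' g').
Proof.
  intros [h1 h2] [k1 k2]; split; rewrite <- tensm_comp.
  - rewrite h1, k1; apply tensm_id.
  - rewrite h2, k2; apply tensm_id.
Qed.

Lemma ip_id {C : Cat} (a : C) : ip (idm a) (idm a).
Proof. split; apply comp_id_l. Qed.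

Lemma ip_asc {D : MonCat} (x y z : D) : ip (asc x y z) (asc_inv x y z).
Proof. split; [apply asc_inv_l | apply asc_inv_r]. Qed.

Lemma ip_asc_inv {D : MonCat} (x y z : D) : ip (asc_inv x y z) (asc x y z).
Proof. apply ip_sym, ip_asc. Qed.

Lemma hcast_sub {C : Cat} {P : C -> Prop} (x x' y y' : FullSub C P) (e : x = x') (e' : y = y')
  (f : hom x y) :
  hcast e e' f = @hcast C _ _ _ _ (f_equal (@proj1_sig _ _) e) (f_equal (@proj1_sig _ _) e') f.
Proof. destruct e, e'; reflexivity. Qed.

Definition SubF {C D : Cat} (PC : C -> Prop) (PD : D -> Prop) (P : Functor C D)
  (hP : forall a, PC a -> PD (P a)) : Functor (FullSub C PC) (FullSub D PD).
Proof.
  refine (@Build_Functor (FullSub C PC) (FullSub D PD)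
    (fun x => exist _ (P (proj1_sig x)) (hP _ (proj2_sig x)))
    (fun x y f => fmap P f) _ _).
  - intros; simpl; apply fmap_id.
  - intros; simpl; apply fmap_comp.
Defined.

Lemma iso_sub {C D : Cat} (PC : C -> Prop) (PD : D -> Prop) (P : Functor C D) (Q : Functor D C)
  (e1 : forall a : C, Q (P a) = a) (e2 : forall b : D, P (Q b) = b) :
  (forall (a a' : C) (f : hom a a'), hcast (e1 a) (e1 a') (fmap Q (fmap P f)) = f) ->
  (forall (b b' : D) (g : hom b b'), hcast (e2 b) (e2 b') (fmap P (fmap Q g)) = g) ->
  forall (hP : forall a, PC a -> PD (P a)) (hQ : forall b, PD b -> PC (Q b)),
  CatIso (FullSub C PC) (FullSub D PD).
Proof.
  intros H1 H2 hP hQ.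
  exists (SubF PC PD P hP), (SubF PD PC Q hQ).
  set (E1 := fun a : FullSub C PC =>
    sig_eq (fob (SubF PD PC Q hQ) (fob (SubF PC PD P hP) a)) a (e1 (proj1_sig a))).
  set (E2 := fun b : FullSub D PD =>
    sig_eq (fob (SubF PC PD P hP) (fob (SubF PD PC Q hQ) b)) b (e2 (proj1_sig b))).
  exists E1, E2.
  split.
  - intros a a' f. rewrite hcast_sub.
    rewrite (proof_irrelevance _ (f_equal _ (E1 a)) (e1 (proj1_sig a))).
    rewrite (proof_irrelevance _ (f_equal _ (E1 a')) (e1 (proj1_sig a'))).
    apply H1.
  - intros b b' g. rewrite hcast_sub.
    rewrite (proof_irrelevance _ (f_equal _ (E2 b)) (e2 (proj1_sig b))).
    rewrite (proof_irrelevance _ (f_equal _ (E2 b')) (e2 (proj1_sig b'))).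
    apply H2.
Qed.

Definition CompF {A B C : Cat} (G : Functor B C) (F : Functor A B) : Functor A C.
Proof.
  refine (@Build_Functor A C (fun x => G (F x)) (fun x y f => fmap G (fmap F f)) _ _).
  - intros; rewrite !fmap_id; reflexivity.
  - intros; rewrite !fmap_comp; reflexivity.
Defined.

Lemma hcast_trans {C : Cat} {a b c a' b' c' : C} (e1 : a = b) (e2 : b = c)
  (f1 : a' = b') (f2 : b' = c') (g : hom a a') :
  hcast (eq_trans e1 e2) (eq_trans f1 f2) g = hcast e2 f2 (hcast e1 f1 g).
Proof. destruct e2, f2, e1, f1; reflexivity. Qed.

Lemma hcast_fmap {C D : Cat} (Q : Functor C D) {a b a' b' : C} (e : a = b) (e' : a' = b')
  (g : hom a a') :
  hcast (f_equal (fob Q) e) (f_equal (fob Q) e') (fmap Q g) = fmap Q (hcast e e' g).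
Proof. destruct e, e'; reflexivity. Qed.

Lemma iso_trans {A B C : Cat} : CatIso A B -> CatIso B C -> CatIso A C.
Proof.
  intros (P1 & Q1 & e1 & e2 & H1 & H2) (P2 & Q2 & e1' & e2' & H1' & H2').
  exists (CompF P2 P1), (CompF Q1 Q2).
  exists (fun a => eq_trans (f_equal (fob Q1) (e1' (P1 a))) (e1 a)).
  exists (fun c => eq_trans (f_equal (fob P2) (e2 (Q2 c))) (e2' c)).
  split.
  - intros a a' f; simpl. rewrite hcast_trans, hcast_fmap, H1'. apply H1.
  - intros c c' g; simpl. rewrite hcast_trans, hcast_fmap, H2. apply H2'.
Qed.


Definition inv_of {C : Cat} {a b : C} {s : hom a b} (p : is_iso s) : hom b a :=
  proj1_sig (constructive_indefinite_description _ p).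

Lemma inv_of_ip {C : Cat} {a b : C} {s : hom a b} (p : is_iso s) : ip s (inv_of p).
Proof. unfold inv_of. destruct (constructive_indefinite_description _ p) as [g [h1 h2]]. split; assumption. Qed.

Definition SubF2 {C D : Cat} (PC : C -> Prop) (PD : D -> Prop)
  (o : {x : C | PC x} -> {y : D | PD y})
  (m : forall a b, hom (proj1_sig a) (proj1_sig b) -> hom (proj1_sig (o a)) (proj1_sig (o b)))
  (Hid : forall a, m a a (idm _) = idm _)
  (Hc : forall a b c (g : hom (proj1_sig b) (proj1_sig c)) (f : hom (proj1_sig a) (proj1_sig b)),
      m a c (g ∘ f) = m b c g ∘ m a b f) : Functor (FullSub C PC) (FullSub D PD).
Proof.
  refine (@Build_Functor (FullSub C PC) (FullSub D PD) o m _ _).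
  - exact Hid.
  - exact Hc.
Defined.

Lemma hcast_sub' {C : Cat} {P : C -> Prop} (x x' y y' : FullSub C P) (e : x = x') (e' : y = y')
  (f : hom x y) :
  hcast e e' f = @hcast C _ _ _ _ (f_equal (@proj1_sig _ _) e) (f_equal (@proj1_sig _ _) e') f.
Proof. destruct e, e'; reflexivity. Qed.

Lemma hcast_sub2 {C : Cat} {P : C -> Prop} (x x' y y' : FullSub C P) (e : x = x') (e' : y = y')
  (ea : proj1_sig x = proj1_sig x') (eb : proj1_sig y = proj1_sig y') (f : hom x y) :
  hcast e e' f = @hcast C _ _ _ _ ea eb f.
Proof.
  rewrite hcast_sub'. f_equal; apply proof_irrelevance.
Qed.

Lemma iso_sub2 {C D : Cat} (PC : C -> Prop) (PD : D -> Prop)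
  (o1 : {x : C | PC x} -> {y : D | PD y})
  (m1 : forall a b, hom (proj1_sig a) (proj1_sig b) -> hom (proj1_sig (o1 a)) (proj1_sig (o1 b)))
  (o2 : {y : D | PD y} -> {x : C | PC x})
  (m2 : forall a b, hom (proj1_sig a) (proj1_sig b) -> hom (proj1_sig (o2 a)) (proj1_sig (o2 b)))
  (Hid1 : forall a, m1 a a (idm _) = idm _)
  (Hc1 : forall a b c (g : hom (proj1_sig b) (proj1_sig c)) (f : hom (proj1_sig a) (proj1_sig b)),
      m1 a c (g ∘ f) = m1 b c g ∘ m1 a b f)
  (Hid2 : forall a, m2 a a (idm _) = idm _)
  (Hc2 : forall a b c (g : hom (proj1_sig b) (proj1_sig c)) (f : hom (proj1_sig a) (proj1_sig b)),
      m2 a c (g ∘ f) = m2 b c g ∘ m2 a b f)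
  (e1 : forall a, proj1_sig (o2 (o1 a)) = proj1_sig a)
  (e2 : forall b, proj1_sig (o1 (o2 b)) = proj1_sig b) :
  (forall a a' f, hcast (e1 a) (e1 a') (m2 _ _ (m1 a a' f)) = f) ->
  (forall b b' g, hcast (e2 b) (e2 b') (m1 _ _ (m2 b b' g)) = g) ->
  CatIso (FullSub C PC) (FullSub D PD).
Proof.
  intros H1 H2.
  exists (SubF2 PC PD o1 m1 Hid1 Hc1), (SubF2 PD PC o2 m2 Hid2 Hc2).
  set (E1 := fun a : FullSub C PC => sig_eq (o2 (o1 a)) a (e1 a)).
  set (E2 := fun b : FullSub D PD => sig_eq (o1 (o2 b)) b (e2 b)).
  exists E1, E2. split.
  - intros a a' f. rewrite (hcast_sub2 _ _ _ _ _ _ (e1 a) (e1 a')). apply H1.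
  - intros b b' g. rewrite (hcast_sub2 _ _ _ _ _ _ (e2 b) (e2 b')). apply H2.
Qed.

Section Main.
Context {C D : MonCat} (F G : LaxMonFun C D).

Definition PlO (x : ZlObj F G) : ColaxT (DelF F) (DelF G) :=
  @Build_ColaxT _ _ (DelF F) (DelF G)
   (fun _ => zlm F G x) (fun _ _ => zls F G x)
     (fun _ _ => zls_nat F G x)
     (fun _ _ _ g f => zls_comp F G x f g)
     (fun _ => zls_unit F G x).

Definition PlM (x y : ZlCat F G) (f : hom x y) : @hom (ColaxCat (DelF F) (DelF G)) (PlO x) (PlO y).
Proof. exists (fun _ => proj1_sig f). intros A A' X. exact (proj2_sig f X). Defined.

Definition Pl : Functor (ZlCat F G) (ColaxCat (DelF F) (DelF G)).
Proof.
  unshelve refine (@Build_Functor (ZlCat F G) (ColaxCat (DelF F) (DelF G)) PlO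
    PlM _ _).
  - intros; apply sigfun_eq; reflexivity.
  - intros; apply sigfun_eq; reflexivity.
Defined.

Definition QlO (b : ColaxT (DelF F) (DelF G)) : ZlObj F G :=
  @Build_ZlObj C D F G (cx _ _ b tt) (cxf _ _ b tt tt)
     (cxf_nat _ _ b tt tt)
     (fun X Y => cx_comp _ _ b tt tt tt Y X)
     (cx_id _ _ b tt).

Definition QlM (x y : ColaxCat (DelF F) (DelF G)) (g : hom x y) : @hom (ZlCat F G) (QlO x) (QlO y).
Proof. exists (proj1_sig g tt). intros X. exact (proj2_sig g tt tt X). Defined.

Definition Ql : Functor (ColaxCat (DelF F) (DelF G)) (ZlCat F G).
Proof.
  unshelve refine (@Build_Functor (ColaxCat (DelF F) (DelF G)) (ZlCat F G) QlO
    QlM _ _).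
  - intros; apply sig_eq; reflexivity.
  - intros; apply sig_eq; reflexivity.
Defined.


Lemma hcast_Zl (x x' y y' : ZlCat F G) (e : x = x') (e' : y = y') (f : hom x y) :
  proj1_sig (hcast e e' f) = hcast (f_equal (zlm F G) e) (f_equal (zlm F G) e') (proj1_sig f).
Proof. destruct e, e'; reflexivity. Qed.

Lemma hcast_Colax (x x' y y' : ColaxCat (DelF F) (DelF G)) (e : x = x') (e' : y = y')
  (g : hom x y) (A : unit) :
  proj1_sig (hcast e e' g) A =
  @hcast (bhom (lfo (DelF F) A) (lfo (DelF G) A)) _ _ _ _
    (f_equal (fun z : ColaxT (DelF F) (DelF G) => cx _ _ z A) e)
    (f_equal (fun z : ColaxT (DelF F) (DelF G) => cx _ _ z A) e') (proj1_sig g A).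
Proof. destruct e, e'; reflexivity. Qed.

Lemma unit_fun1 {K : Type} (h : unit -> K) : exists k, h = fun _ => k.
Proof. exists (h tt). apply functional_extensionality. intros []. reflexivity. Qed.

Lemma unit_fun2 {K : Type} (h : unit -> unit -> K) : exists k, h = fun _ _ => k.
Proof.
  exists (h tt tt). apply functional_extensionality. intros [].
  apply functional_extensionality. intros []. reflexivity.
Qed.

Lemma colax_pi cx0 cxf0 n n' c c' i i' :
  @Build_ColaxT _ _ (DelF F) (DelF G) cx0 cxf0 n c i =
  @Build_ColaxT _ _ (DelF F) (DelF G) cx0 cxf0 n' c' i'.
Proof.
  rewrite (proof_irrelevance _ n n'), (proof_irrelevance _ c c'),
    (proof_irrelevance _ i i'). reflexivity.
Qed.

Lemma el (x : ZlObj F G) : QlO (PlO x) = x.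
Proof. destruct x; reflexivity. Qed.

Lemma er (b : ColaxT (DelF F) (DelF G)) : PlO (QlO b) = b.
Proof.
  destruct b as [cx0 cxf0 n c i].
  destruct (unit_fun1 cx0) as [d ->].
  destruct (@unit_fun2 (forall f : mcat C, hom (tens d (lmf F f)) (tens (lmf G f) d)) cxf0)
    as [k ->].
  apply colax_pi.
Qed.

Lemma iso_l : CatIso (ZlCat F G) (ColaxCat (DelF F) (DelF G)).
Proof.
  exists Pl, Ql, el, er. split.
  - intros a a' f. apply sig_eq. rewrite hcast_Zl. apply hcast_refl.
  - intros b b' g. apply sigfun_eq. intros A. rewrite hcast_Colax. destruct A.
    apply hcast_refl.
Qed.


Definition PrO (x : ZrObj F G) : LaxT (DelF F) (DelF G) :=
  @Build_LaxT _ _ (DelF F) (DelF G)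
   (fun _ => zrm F G x) (fun _ _ => zrs F G x)
     (fun _ _ => zrs_nat F G x)
     (fun _ _ _ g f => eq_sym (zrs_comp F G x f g))
     (fun _ => zrs_unit F G x).

Definition PrM (x y : ZrCat F G) (f : hom x y) : @hom (LaxCat (DelF F) (DelF G)) (PrO x) (PrO y).
Proof. exists (fun _ => proj1_sig f). intros A A' X. exact (proj2_sig f X). Defined.

Definition Pr : Functor (ZrCat F G) (LaxCat (DelF F) (DelF G)).
Proof.
  unshelve refine (@Build_Functor (ZrCat F G) (LaxCat (DelF F) (DelF G)) PrO
    PrM _ _).
  - intros; apply sigfun_eq; reflexivity.
  - intros; apply sigfun_eq; reflexivity.
Defined.

Definition QrO (b : LaxT (DelF F) (DelF G)) : ZrObj F G :=
  @Build_ZrObj C D F G (lx _ _ b tt) (lxf _ _ b tt tt)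
     (lxf_nat _ _ b tt tt)
     (fun X Y => eq_sym (lx_comp _ _ b tt tt tt Y X))
     (lx_id _ _ b tt).

Definition QrM (x y : LaxCat (DelF F) (DelF G)) (g : hom x y) : @hom (ZrCat F G) (QrO x) (QrO y).
Proof. exists (proj1_sig g tt). intros X. exact (proj2_sig g tt tt X). Defined.

Definition Qr : Functor (LaxCat (DelF F) (DelF G)) (ZrCat F G).
Proof.
  unshelve refine (@Build_Functor (LaxCat (DelF F) (DelF G)) (ZrCat F G) QrO
    QrM _ _).
  - intros; apply sig_eq; reflexivity.
  - intros; apply sig_eq; reflexivity.
Defined.

Lemma hcast_Zr (x x' y y' : ZrCat F G) (e : x = x') (e' : y = y') (f : hom x y) :
  proj1_sig (hcast e e' f) = hcast (f_equal (zrm F G) e) (f_equal (zrm F G) e') (proj1_sig f).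
Proof. destruct e, e'; reflexivity. Qed.

Lemma hcast_Lax (x x' y y' : LaxCat (DelF F) (DelF G)) (e : x = x') (e' : y = y')
  (g : hom x y) (A : unit) :
  proj1_sig (hcast e e' g) A =
  @hcast (bhom (lfo (DelF F) A) (lfo (DelF G) A)) _ _ _ _
    (f_equal (fun z : LaxT (DelF F) (DelF G) => lx _ _ z A) e)
    (f_equal (fun z : LaxT (DelF F) (DelF G) => lx _ _ z A) e') (proj1_sig g A).
Proof. destruct e, e'; reflexivity. Qed.

Lemma lax_pi cx0 cxf0 n n' c c' i i' :
  @Build_LaxT _ _ (DelF F) (DelF G) cx0 cxf0 n c i =
  @Build_LaxT _ _ (DelF F) (DelF G) cx0 cxf0 n' c' i'.
Proof.
  rewrite (proof_irrelevance _ n n'), (proof_irrelevance _ c c'),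
    (proof_irrelevance _ i i'). reflexivity.
Qed.

Lemma zr_pi m s n n' c c' i i' :
  @Build_ZrObj C D F G m s n c i = @Build_ZrObj C D F G m s n' c' i'.
Proof.
  rewrite (proof_irrelevance _ n n'), (proof_irrelevance _ c c'),
    (proof_irrelevance _ i i'). reflexivity.
Qed.

Lemma elr (x : ZrObj F G) : QrO (PrO x) = x.
Proof. destruct x; apply zr_pi. Qed.

Lemma err (b : LaxT (DelF F) (DelF G)) : PrO (QrO b) = b.
Proof.
  destruct b as [cx0 cxf0 n c i].
  destruct (unit_fun1 cx0) as [d ->].
  destruct (@unit_fun2 (forall f : mcat C, hom (tens (lmf G f) d) (tens d (lmf F f))) cxf0)
    as [k ->].
  apply lax_pi.
Qed.

Lemma iso_r : CatIso (ZrCat F G) (LaxCat (DelF F) (DelF G)).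
Proof.
  exists Pr, Qr, elr, err. split.
  - intros a a' f. apply sig_eq. rewrite hcast_Zr. apply hcast_refl.
  - intros b b' g. apply sigfun_eq. intros A. rewrite hcast_Lax. destruct A.
    apply hcast_refl.
Qed.

Lemma iso_ls : CatIso (ZlsCat F G) (PseudoCat (DelF F) (DelF G)).
Proof.
  apply (iso_sub _ _ Pl Ql el er).
  - intros a a' f. apply sig_eq. rewrite hcast_Zl. apply hcast_refl.
  - intros b b' g. apply sigfun_eq. intros A. rewrite hcast_Colax. destruct A.
    apply hcast_refl.
  - intros a p A A' X. exact (p X).
  - intros b p X. exact (p tt tt X).
Qed.

Definition r2l (x : ZrObj F G)
  (inv : forall X, hom (tens (zrm F G x) (F X)) (tens (G X) (zrm F G x)))
  (H : forall X, ip (zrs F G x X) (inv X)) : ZlObj F G.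
Proof.
  set (m := zrm F G x).
  refine (@Build_ZlObj C D F G m inv _ _ _).
  - abstract (intros X Y f; apply (swap _ _ _ _ _ _ (H X) (H Y)); symmetry; apply zrs_nat).
  - abstract (intros X Y;
    set (T := tensm (zrs F G x Y) (idm (F X)) ∘ asc_inv (G Y) m (F X)
           ∘ tensm (idm (G Y)) (zrs F G x X) ∘ asc (G Y) (G X) m);
    pose proof (ip_comp _ _ _ _ (ip_asc (G Y) (G X) m)
      (ip_comp _ _ _ _ (ip_tens _ _ _ _ (ip_id (G Y)) (H X))
      (ip_comp _ _ _ _ (ip_asc_inv (G Y) m (F X)) (ip_tens _ _ _ _ (H Y) (ip_id (F X))))))
      as HT;
    assert (EQ : (tensm (idm m) (lm2 F Y X) ∘ asc m (F Y) (F X)) ∘ T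
                 = zrs F G x (tens Y X) ∘ tensm (lm2 G Y X) (idm m));
    [ unfold T; rewrite !comp_assoc; apply zrs_comp | ];
    pose proof (swap _ _ _ _ _ _ HT (H (tens Y X)) EQ) as H';
    unfold T in *; repeat rewrite comp_assoc in H'; repeat rewrite comp_assoc; symmetry; exact H').
  - abstract (unfold m; rewrite <- (comp_assoc _ _ _ _ _ (inv munit)), <- (zrs_unit F G x), !comp_assoc,
      (proj1 (H munit)), comp_id_l; reflexivity).
Defined.

Definition l2r (x : ZlObj F G)
  (inv : forall X, hom (tens (G X) (zlm F G x)) (tens (zlm F G x) (F X)))
  (H : forall X, ip (zls F G x X) (inv X)) : ZrObj F G.
Proof.
  set (m := zlm F G x).
  refine (@Build_ZrObj C D F G m inv _ _ _).
  - abstract (intros X Y f; apply (swap _ _ _ _ _ _ (H X) (H Y)); symmetry; apply zls_nat).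
  - abstract (intros X Y;
    set (T := asc_inv (G Y) (G X) m ∘ tensm (idm (G Y)) (zls F G x X)
           ∘ asc (G Y) m (F X) ∘ tensm (zls F G x Y) (idm (F X)));
    pose proof (ip_comp _ _ _ _ (ip_tens _ _ _ _ (H Y) (ip_id (F X)))
      (ip_comp _ _ _ _ (ip_asc (G Y) m (F X))
      (ip_comp _ _ _ _ (ip_tens _ _ _ _ (ip_id (G Y)) (H X)) (ip_asc_inv (G Y) (G X) m))))
      as HT;
    assert (EQ : tensm (lm2 G Y X) (idm m) ∘ T
                 = zls F G x (tens Y X) ∘ (tensm (idm m) (lm2 F Y X) ∘ asc m (F Y) (F X)));
    [ unfold T; rewrite !comp_assoc; apply zls_comp | ];
    pose proof (swap _ _ _ _ _ _ HT (H (tens Y X)) EQ) as H';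
    unfold T in *; repeat rewrite comp_assoc in H'; repeat rewrite comp_assoc; symmetry; exact H').
  - abstract (unfold m; rewrite <- (comp_assoc _ _ _ _ _ (inv munit)), <- (zls_unit F G x), !comp_assoc,
      (proj1 (H munit)), comp_id_l; reflexivity).
Defined.

Definition PZr := fun x : ZrObj F G => forall X : C, is_iso (zrs F G x X).
Definition PZl := fun x : ZlObj F G => forall X : C, is_iso (zls F G x X).

Definition oRL (x : {x : ZrCat F G | PZr x}) : {y : ZlCat F G | PZl y} :=
  exist PZl (r2l (proj1_sig x) (fun X => inv_of (proj2_sig x X)) (fun X => inv_of_ip _))
    (fun X => ex_intro (ip _) (zrs F G (proj1_sig x) X) (ip_sym _ _ (inv_of_ip (proj2_sig x X)))).

Definition oLR (x : {x : ZlCat F G | PZl x}) : {y : ZrCat F G | PZr y} :=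
  exist PZr (l2r (proj1_sig x) (fun X => inv_of (proj2_sig x X)) (fun X => inv_of_ip _))
    (fun X => ex_intro (ip _) (zls F G (proj1_sig x) X) (ip_sym _ _ (inv_of_ip (proj2_sig x X)))).

Lemma mRL_pf (x y : {x : ZrCat F G | PZr x}) (f : @hom (ZrCat F G) (proj1_sig x) (proj1_sig y)) :
  forall X : C,
  tensm (idm (G X)) (proj1_sig f) ∘ inv_of (proj2_sig x X) =
  inv_of (proj2_sig y X) ∘ tensm (proj1_sig f) (idm (F X)).
Proof.
  intros X.
  exact (eq_sym (swap _ _ _ _ _ _ (inv_of_ip (proj2_sig x X)) (inv_of_ip (proj2_sig y X)) (proj2_sig f X))).
Qed.

Lemma mLR_pf (x y : {x : ZlCat F G | PZl x}) (f : @hom (ZlCat F G) (proj1_sig x) (proj1_sig y)) :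
  forall X : C,
  tensm (proj1_sig f) (idm (F X)) ∘ inv_of (proj2_sig x X) =
  inv_of (proj2_sig y X) ∘ tensm (idm (G X)) (proj1_sig f).
Proof.
  intros X.
  exact (eq_sym (swap _ _ _ _ _ _ (inv_of_ip (proj2_sig x X)) (inv_of_ip (proj2_sig y X)) (proj2_sig f X))).
Qed.

Definition mRL (x y : {x : ZrCat F G | PZr x}) (f : @hom (ZrCat F G) (proj1_sig x) (proj1_sig y)) :
  @hom (ZlCat F G) (proj1_sig (oRL x)) (proj1_sig (oRL y)) :=
  exist _ (proj1_sig f) (mRL_pf x y f).

Definition mLR (x y : {x : ZlCat F G | PZl x}) (f : @hom (ZlCat F G) (proj1_sig x) (proj1_sig y)) :
  @hom (ZrCat F G) (proj1_sig (oLR x)) (proj1_sig (oLR y)) :=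
  exist _ (proj1_sig f) (mLR_pf x y f).

Lemma zr_eq2 m s s' n n' c c' i i' :
  (forall X, s X = s' X) ->
  @Build_ZrObj C D F G m s n c i = @Build_ZrObj C D F G m s' n' c' i'.
Proof.
  intros E. assert (s = s') by (apply functional_extensionality_dep; exact E).
  subst s'. apply zr_pi.
Qed.

Lemma zl_eq2 m s s' n n' c c' i i' :
  (forall X, s X = s' X) ->
  @Build_ZlObj C D F G m s n c i = @Build_ZlObj C D F G m s' n' c' i'.
Proof.
  intros E. assert (s = s') by (apply functional_extensionality_dep; exact E).
  subst s'.
  rewrite (proof_irrelevance _ n n'), (proof_irrelevance _ c c'),
    (proof_irrelevance _ i i'). reflexivity.
Qed.

Lemma rl1 (x : {x : ZrCat F G | PZr x}) : proj1_sig (oLR (oRL x)) = proj1_sig x.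
Proof.
  destruct x as [[m s n c i] p]. simpl. apply zr_eq2. intros X.
  eapply ip_uniq; [apply inv_of_ip | apply ip_sym, (inv_of_ip (p X))].
Qed.

Lemma rl2 (x : {x : ZlCat F G | PZl x}) : proj1_sig (oRL (oLR x)) = proj1_sig x.
Proof.
  destruct x as [[m s n c i] p]. simpl. apply zl_eq2. intros X.
  eapply ip_uniq; [apply inv_of_ip | apply ip_sym, (inv_of_ip (p X))].
Qed.

Lemma iso_rl : CatIso (ZrsCat F G) (ZlsCat F G).
Proof.
  refine (iso_sub2 (C := ZrCat F G) (D := ZlCat F G) PZr PZl oRL mRL oLR mLR _ _ _ _ rl1 rl2 _ _).
  - intros; apply sig_eq; reflexivity.
  - intros; apply sig_eq; reflexivity.
  - intros; apply sig_eq; reflexivity.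
  - intros; apply sig_eq; reflexivity.
  - (intros a a' f; apply sig_eq; rewrite hcast_Zr; apply hcast_refl).
  - (intros a a' f; apply sig_eq; rewrite hcast_Zl; apply hcast_refl).
Qed.
End Main.

Theorem proposition3p6 (C D : MonCat) (F G : LaxMonFun C D) :
  CatIso (ZlCat F G) (ColaxCat (DelF F) (DelF G)) /\
  CatIso (ZlsCat F G) (PseudoCat (DelF F) (DelF G)) /\
  CatIso (ZrCat F G) (LaxCat (DelF F) (DelF G)) /\
  CatIso (ZrsCat F G) (PseudoCat (DelF F) (DelF G)).
Proof.
  split; [apply iso_l|]. split; [apply iso_ls|]. split; [apply iso_r|].
  eapply iso_trans; [apply iso_rl | apply iso_ls].
Qed.
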